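(* Let $\Gamma$ be a strictly positive definite, irreducible $n\times n$ covariance matrix such that $\Gamma^{-1}$ is an $M$-matrix, and for $t>0$ let $Q(t)=[I+(t\Gamma)^{-1}]^{-1}=I-(I+t\Gamma)^{-1}$. Then for all $t$ sufficiently large, every entry of $Q(t)$ is strictly positive.
   Context: A non-singular matrix $A$ is an $M$-matrix if all entries of $A^{-1}$ are non-negative and $A_{i,j}\le 0$ for all $i\ne j$. A symmetric matrix is irreducible if it cannot be written as a direct sum of square matrices. *)

(* Defs.v *)
From HB Require Import structures.
From mathcomp Require Import all_boot all_order all_algebra.
From mathcomp Require Import reals.
Set Implicit Arguments. Unset Strict Implicit. Unset Printing Implicit Defensive.
Import Order.TTheory GRing.Theory Num.Theory.
Local Open Scope ring_scope.

Definition pos_def_sym (R : realType) (n : nat) (A : 'M[R]_n) : Prop :=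
  A^T = A /\ (forall x : 'cV[R]_n, x != 0 -> 0 < (x^T *m A *m x) 0 0).

(* Irreducible: A cannot be written (after a simultaneous permutation of
   rows and columns) as a direct sum of two square blocks, i.e. there is
   no proper nonempty index set S with A i j = 0 for i in S, j not in S. *)
Definition irreducible_mx (R : realType) (n : nat) (A : 'M[R]_n) : Prop :=
  ~ (exists S : {set 'I_n}, [/\ S != set0, S != setT &
       forall i j, i \in S -> j \notin S -> A i j = 0]).

Definition M_matrix (R : realType) (n : nat) (A : 'M[R]_n) : Prop :=
  [/\ A \in unitmx, (forall i j, 0 <= invmx A i j) &
      (forall i j, i != j -> A i j <= 0)].

Definition Qmx (R : realType) (n : nat) (G : 'M[R]_n) (t : R) : 'M[R]_n :=
  invmx (1%:M + invmx (t *: G)).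

(* Main.v *)
Require Import Defs.
From HB Require Import structures.
From mathcomp Require Import all_boot all_order all_algebra.
From mathcomp Require Import reals.
From mathcomp Require Import lra.
Import Order.TTheory GRing.Theory Num.Theory.
Local Open Scope ring_scope.

Lemma quad_expand (R : realType) (n : nat) (A : 'M[R]_n) (x : 'cV[R]_n) :
  (x^T *m A *m x) 0 0 = \sum_i x i 0 * (A *m x) i 0.
Proof. by rewrite -mulmxA mxE; apply: eq_bigr => i _; rewrite mxE. Qed.

Lemma pd_inv (R : realType) (n : nat) (G : 'M[R]_n) :
  pos_def_sym G -> G \in unitmx ->
  forall x : 'cV[R]_n, x != 0 -> 0 < (x^T *m invmx G *m x) 0 0.
Proof.
move=> [GT pd] Gu x xn0.
set u := invmx G *m x.
have hx : x = G *m u by rewrite /u mulmxA mulmxV // mul1mx.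
have un0 : u != 0.
  by apply: contraNneq xn0 => u0; rewrite hx u0 mulmx0.
rewrite hx trmx_mul GT -mulmxA (mulmxA (invmx G)) mulVmx // mul1mx.
exact: pd.
Qed.

Lemma zero_block (R : realType) (n : nat) (A G : 'M[R]_n) (Z : {set 'I_n}) :
  (forall x : 'cV[R]_n, x != 0 -> 0 < (x^T *m A *m x) 0 0) ->
  A *m G = 1%:M ->
  (forall i k, i \in Z -> k \notin Z -> A i k = 0) ->
  forall i k, i \in Z -> k \notin Z -> G i k = 0.
Proof.
move=> pdA AG hA i k iZ kZ.
set v : 'cV[R]_n := \col_m (if m \in Z then G m k else 0).
have Av : forall i', i' \in Z -> (A *m v) i' 0 = 0.
  move=> i' i'Z; rewrite mxE.
  transitivity (\sum_m A i' m * G m k).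
    apply: eq_bigr => m _; rewrite mxE; case: ifP => mZ //.
    by rewrite hA ?mZ // !mul0r.
  have := congr1 (fun M : 'M[R]_n => M i' k) AG; rewrite mxE => ->.
  rewrite mxE; have /negbTE -> : i' != k by apply: contraNneq kZ => <-.
  by rewrite mulr0n.
have v0 : v = 0.
  apply/eqP; apply: contraT => vn0; have := pdA v vn0.
  rewrite quad_expand big1 ?ltxx // => m _.
  case mZ: (m \in Z); first by rewrite Av // mulr0.
  by rewrite [v m 0]mxE mZ mul0r.
have := congr1 (fun M : 'cV[R]_n => M i 0) v0; rewrite !mxE iZ => ->; by [].
Qed.

Lemma nonneg_sol (R : realType) (n : nat) (A : 'M[R]_n) (w x : 'I_n -> R) (s : R) :
  (forall k, 0 < w k) ->
  (forall i k, i != k -> A i k <= 0) ->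
  (forall i, \sum_k A i k * w k = 1) ->
  0 < s ->
  (forall i, 0 <= x i + s * \sum_k A i k * x k) ->
  forall i, 0 <= x i.
Proof.
move=> wpos Aoff Aw spos h i0.
case: (leP 0 (x i0)) => // hneg.
pose F k := x k / w k.
have [i _ hmin] := @arg_minP _ R 'I_n i0 predT F isT.
set m := F i in hmin *.
have mneg : m < 0.
  apply: le_lt_trans (hmin i0 isT) _.
  by rewrite /F ltr_pdivrMr // mul0r.
have xi : x i = m * w i by rewrite /m /F divfK // gt_eqF.
have xk : forall k, m * w k <= x k.
  by move=> k; have := hmin k isT; rewrite /F ler_pdivlMr.
have hS : \sum_k A i k * x k <= m.
  have -> : m = \sum_k A i k * (m * w k).
    by rewrite -[LHS]mulr1 -(Aw i) mulr_sumr; apply: eq_bigr => k _; rewrite mulrCA.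
  apply: ler_sum => k _.
  case: (eqVneq i k) => [<-|ik]; first by rewrite xi.
  by apply: ler_wnM2l; [exact: Aoff | exact: xk].
have h1 : s * \sum_k A i k * x k <= s * m by rewrite ler_pM2l.
have h2 : m * w i < 0 by rewrite pmulr_llt0.
have h3 : s * m < 0 by rewrite pmulr_rlt0.
have := h i; rewrite xi; lra.
Qed.

Lemma unit_M (R : realType) (n : nat) (A : 'M[R]_n) (s : R) :
  (forall x : 'cV[R]_n, x != 0 -> 0 < (x^T *m A *m x) 0 0) -> 0 < s ->
  1%:M + s *: A \in unitmx.
Proof.
move=> pdA spos.
rewrite -row_free_unit -kermx_eq0.
apply/eqP; apply/row_matrixP => r; rewrite row0.
set u := row r _.
have uM : u *m (1%:M + s *: A) = 0 by rewrite /u -row_mul mulmx_ker row0.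
apply/eqP; apply: contraT => un0.
have uT0 : u^T != 0 by rewrite trmx_eq0.
have := pdA _ uT0; rewrite trmxK => hpos.
have uM2 : (u + s *: (u *m A)) *m u^T = 0.
  by rewrite scalemxAr -[u in u + _]mulmx1 -mulmxDr uM mul0mx.
rewrite mulmxDl -scalemxAl in uM2.
have := congr1 (fun N : 'M[R]_1 => N 0 0) uM2.
rewrite /= [X in X = _ -> _]mxE [X in _ + X = _ -> _]mxE [X in _ = X -> _]mxE.
have hsq : 0 <= (u *m u^T) 0 0.
  rewrite mxE; apply: sumr_ge0 => k _; rewrite !mxE -expr2 sqr_ge0 //.
have : 0 < s * (u *m A *m u^T) 0 0 by apply: mulr_gt0.
move=> h1 h2; exfalso; lra.
Qed.

Theorem lemma1p7 (R : realType) (n : nat) (G : 'M[R]_n) :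
  pos_def_sym G -> irreducible_mx G -> M_matrix (invmx G) ->
  exists T : R, forall t : R, 0 < t -> T < t ->
    forall i j : 'I_n, 0 < Qmx G t i j.
Proof.
move=> pdG irrG [Au nnA offA].
have Gu : G \in unitmx by rewrite -unitmx_inv.
have GA : invmx (invmx G) = G by rewrite invmxK.
have AG : invmx G *m G = 1%:M by rewrite mulVmx.
have Gnn : forall i j, 0 <= G i j by move=> i j; rewrite -GA.
have pdA := @pd_inv _ _ _ pdG Gu.
have Gkk : forall k, 0 < G k k.
  move=> k.
  have dn0 : (delta_mx k 0 : 'cV[R]_n) != 0.
    apply/eqP => /matrixP/(_ k 0); rewrite !mxE !eqxx /= => /eqP.
    by rewrite oner_eq0.
  have := pdG.2 _ dn0.
  by rewrite trmx_delta -rowE -colE !mxE.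
pose w := fun k : 'I_n => (G *m (const_mx 1 : 'cV[R]_n)) k 0.
have wpos : forall k, 0 < w k.
  move=> k; rewrite /w mxE (bigD1 k) //= mxE mulr1.
  rewrite (eq_bigr (fun l => G k l)); last by move=> l _; rewrite mxE mulr1.
  have : 0 <= \sum_(l | l != k) G k l by apply: sumr_ge0 => l _.
  have := Gkk k; move=> h1 h2; lra.
have Aw : forall i, \sum_k invmx G i k * w k = 1.
  move=> i.
  have H : invmx G *m (G *m (const_mx 1 : 'cV[R]_n)) = const_mx 1 by rewrite mulmxA AG mul1mx.
  have := congr1 (fun N : 'cV[R]_n => N i 0) H.
  by rewrite /= [X in X = _ -> _]mxE [X in _ = X -> _]mxE.
exists 0 => t tpos _ i j.
rewrite /Qmx invmxZ ?unitmxZ ?unitfE ?gt_eqF //.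
set s := t^-1.
have spos : 0 < s by rewrite invr_gt0.
set A := invmx G in nnA offA GA AG pdA Aw *.
have Mu := @unit_M _ _ _ _ pdA spos.
set Q := invmx (1%:M + s *: A).
have MQ : Q + s *: (A *m Q) = 1%:M.
  by rewrite scalemxAl -{1}(mul1mx Q) -mulmxDl mulmxV.
have eqQ : forall i j, Q i j + s * \sum_k A i k * Q k j = (i == j)%:R.
  move=> i' j'; have := congr1 (fun N : 'M[R]_n => N i' j') MQ.
  by rewrite !mxE.
have Qnn : forall i j, 0 <= Q i j.
  move=> i' j'.
  apply: (@nonneg_sol R n A w (fun k => Q k j') s wpos offA Aw spos).
  by move=> k; rewrite eqQ ler0n.
rewrite lt_def Qnn andbT; apply/eqP => Qij.
apply: irrG.
set Z := [set k | Q k j == 0].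
have hZ : forall k, k \in Z -> (k != j) /\ (forall l, l \notin Z -> A k l = 0).
  move=> k; rewrite inE => /eqP Qk.
  have hle : forall l, A k l * Q l j <= 0.
    move=> l; case: (eqVneq k l) => [<-|kl]; first by rewrite Qk mulr0.
    exact: mulr_le0_ge0 (offA k l kl) (Qnn l j).
  have hk := eqQ k j; rewrite Qk add0r in hk.
  have Sle : \sum_l A k l * Q l j <= 0.
    by rewrite -oppr_ge0 -sumrN; apply: sumr_ge0 => l _; rewrite oppr_ge0.
  have kj : k != j.
    have hs : s * \sum_l A k l * Q l j <= 0 by rewrite pmulr_rle0.
    by apply/negP => /eqP kj; move: hs; rewrite hk kj eqxx ler10.
  split=> // l lZ.
  rewrite (negbTE kj) in hk.
  have S0 : \sum_l A k l * Q l j = 0.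
    by move/eqP: hk; rewrite mulf_eq0 (gt_eqF spos) /= => /eqP.
  have hnn : forall l', predT l' -> 0 <= - (A k l' * Q l' j).
    by move=> l' _; rewrite oppr_ge0.
  have hs0 : \sum_(l' | predT l') - (A k l' * Q l' j) = 0.
    by rewrite sumrN S0 oppr0.
  have := @psumr_eq0P _ _ _ _ hnn hs0 l isT.
  move/eqP; rewrite oppr_eq0 mulf_eq0 => /orP [/eqP //| h].
  by move: lZ; rewrite inE h.
exists Z; split.
- by apply/set0Pn; exists i; rewrite inE Qij.
- apply/eqP => ZT.
  have : j \in Z by rewrite ZT inE.
  by move/hZ => [/eqP].
- move=> k l kZ lZ.
  apply: (@zero_block R n A G Z pdA AG _ k l kZ lZ) => k' l' kZ' lZ'.
  exact: (hZ k' kZ').2 l' lZ'.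
Qed.
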